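(* (Parity.) There exists an $n$-RASP-L program with $T(n)=n$ that solves the $n$-bit parity task: for every $n\ge 1$, every $n'\ge 0$ and every binary sequence $x_1,\dots,x_n\in\{0,1\}$, the program maps the input sequence $$x_1\,\dots\,x_n\;\texttt{>}\;\underbrace{\texttt{\#}\,\dots\,\texttt{\#}}_{n'}$$ (of length $n+1+n'$) to an output sequence of the same length of the form $$\underbrace{*\,\dots\,*}_{n}\; y\;\underbrace{\texttt{\#}\,\dots\,\texttt{\#}}_{n'},$$ where $y=x_1\oplus x_2\oplus\cdots\oplus x_n$ is the parity of the input bits.
   Context: Tokens: $\texttt{>}$ is a special end-of-query (EOQ) token, $\texttt{\#}$ is a special end-of-sequence (EOS) token, and $*$ in the output denotes a position whose value is ignored (any value is allowed there). RASP-L is a restricted programming language modelling decoder-only (causal) Transformers. A RASP-L program takes an integer-token sequence of arbitrary length and returns a sequence of the same length. It is straight-line code (no branching, no loops), each line being a call to a core primitive or to another RASP-L program. Core primitives: $\mathrm{indices}(x)$ (the sequence $0,1,\dots,|x|-1$); $\mathrm{full}(x,c)$ (constant sequence); elementwise maps applying a fixed function to the tokens at each position of one or more sequences; and the causal attention operation $\mathrm{kqv}(k,q,v,\mathrm{pred},\mathrm{default})$, whose output at position $i$ is the (integer-truncated) mean of $v_j$ over all $j\le i$ with $\mathrm{pred}(k_j,q_i)$ true, or $\mathrm{default}$ if no such $j$ exists. Operations on token indices are restricted to order comparisons and successor/predecessor (e.g. $\mathrm{indices}(x)+1$); arbitrary index arithmetic is not allowed. For example, shifting a sequence right by one position is $\mathrm{kqv}(\mathrm{indices}(x)+1,\mathrm{indices}(x),x,=,0)$.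 An $n$-RASP-L program is a program $P$ for which there exist a function $T:\mathbb{N}\to\mathbb{N}$ and a RASP-L program $P'$ such that, on inputs of problem size $n$, $P$ consists of the sequential application of $P'$ for $T(n)$ steps (the paper allows fixed RASP-L pre-processing and post-processing steps, e.g. handling EOS/EOQ tokens, outside this loop). *)

(* Defs.v *)
From Stdlib Require Import ZArith List Bool.
Import ListNotations.
Open Scope Z_scope.

(** Tokens are integers. Special tokens: EOQ '>' and EOS '#'. *)
Definition EOQ : Z := 2.
Definition EOS : Z := 3.

(** Kinds of sequences: ordinary token-valued sequences, and index-valued
    sequences (derived from [indices]) on which only successor/predecessor
    and order comparisons are allowed. *)
Inductive kind := KTok | KIdx.

Definition kind_eqb (a b : kind) : bool :=
  match a, b with KTok, KTok | KIdx, KIdx => true | _, _ => false end.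

Inductive cmpop := CLt | CLe | CEq | CNe | CGe | CGt.

Definition cmpZ (c : cmpop) (a b : Z) : bool :=
  match c with
  | CLt => a <? b | CLe => a <=? b | CEq => a =? b
  | CNe => negb (a =? b) | CGe => b <=? a | CGt => b <? a
  end.

(** One line of straight-line code. Registers are referred to by their
    absolute number: register 0 is the input, register k+1 is the result
    of line k. *)
Inductive instr :=
| IIndices (r : nat)
| IFull (r : nat) (c : Z)
| IMap (f : list Z -> Z) (rs : list nat)
| ISucc (r : nat)
| IPred (r : nat)
| ICmp (c : cmpop) (r1 r2 : nat)
| IKqvTok (k q v : nat) (p : Z -> Z -> bool) (d : Z)
| IKqvIdx (k q v : nat) (c : cmpop) (d : Z).

Definition program := list instr.

Definition instr_kind (ks : list kind) (i : instr) : option kind :=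
  let ok r := Nat.ltb r (length ks) in
  let isk r k := ok r && kind_eqb (nth r ks KTok) k in
  match i with
  | IIndices r => if ok r then Some KIdx else None
  | IFull r _ => if ok r then Some KTok else None
  | IMap _ rs =>
      match rs with
      | [] => None
      | _ => if forallb (fun r => isk r KTok) rs then Some KTok else None
      end
  | ISucc r | IPred r => if isk r KIdx then Some KIdx else None
  | ICmp _ r1 r2 => if isk r1 KIdx && isk r2 KIdx then Some KTok else None
  | IKqvTok k q v _ _ =>
      if isk k KTok && isk q KTok && isk v KTok then Some KTok else None
  | IKqvIdx k q v _ _ =>
      if isk k KIdx && isk q KIdx && isk v KTok then Some KTok else None
  end.

Fixpoint check_prog (ks : list kind) (p : program) : option (list kind) :=
  match p with
  | [] => Some ks
  | i :: p' =>
      match instr_kind ks i with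
      | Some k => check_prog (ks ++ [k]) p'
      | None => None
      end
  end.

Definition is_raspl (p : program) : Prop :=
  match check_prog [KTok] p with
  | Some ks => last ks KIdx = KTok
  | None => False
  end.

(** Causal attention: at position i, the truncated mean of v_j over
    j <= i with pred (k_j) (q_i), or the default if there is no such j. *)
Definition kqv_sem (L : nat) (k q v : list Z) (pred : Z -> Z -> bool) (d : Z)
  : list Z :=
  map (fun i =>
         let js := filter (fun j => pred (nth j k 0) (nth i q 0)) (seq 0 (S i)) in
         match js with
         | [] => d
         | _ => Z.quot (fold_right Z.add 0 (map (fun j => nth j v 0) js))
                       (Z.of_nat (length js))
         end)
      (seq 0 L).

Definition eval_instr (env : list (list Z)) (i : instr) : list Z :=
  let reg r := nth r env [] in
  let get r j := nth j (reg r) 0 in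
  let L := length (reg 0%nat) in
  match i with
  | IIndices r => map Z.of_nat (seq 0 (length (reg r)))
  | IFull r c => repeat c (length (reg r))
  | IMap f rs => map (fun j => f (map (fun r => get r j) rs)) (seq 0 L)
  | ISucc r => map (fun z => z + 1) (reg r)
  | IPred r => map (fun z => z - 1) (reg r)
  | ICmp c r1 r2 =>
      map (fun j => if cmpZ c (get r1 j) (get r2 j) then 1 else 0) (seq 0 L)
  | IKqvTok k q v p d => kqv_sem L (reg k) (reg q) (reg v) p d
  | IKqvIdx k q v c d => kqv_sem L (reg k) (reg q) (reg v) (cmpZ c) d
  end.

Fixpoint run_env (env : list (list Z)) (p : program) : list (list Z) :=
  match p with
  | [] => env
  | i :: p' => run_env (env ++ [eval_instr env i]) p'
  end.

Definition run (p : program) (x : list Z) : list Z :=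
  last (run_env [x] p) [].

Definition run_looped (pre body post : program) (T : nat -> nat) (n : nat)
  (x : list Z) : list Z :=
  run post (Nat.iter (T n) (run body) (run pre x)).

Definition parity (xs : list Z) : Z := (fold_right Z.add 0 xs) mod 2.

(* Main.v *)
Require Import Defs.
From Stdlib Require Import ZArith List Lia Bool.
Import ListNotations.
Open Scope Z_scope.

Definition G (c p : Z) : Z :=
  if c =? 3 then 3
  else if (c =? 10) || (c =? 11) then
         (if (p =? 0) || (p =? 1) then 10 + ((c - 10 + p) mod 2) else c)
       else p.

Definition gB (l : list Z) : Z := match l with [c; p] => G c p | _ => 0 end.
Definition hPre (l : list Z) : Z :=
  match l with [c] => if c =? 2 then 10 else c | _ => 0 end.
Definition hPost (l : list Z) : Z :=
  match l with [c] => if c =? 10 then 0 else if c =? 11 then 1 else c | _ => 0 end.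

Definition preP : program := [IMap hPre [0%nat]].
Definition postP : program := [IMap hPost [0%nat]].
Definition bodyP : program :=
  [IIndices 0; ISucc 1; IKqvIdx 2 1 0 CEq 4; IMap gB [0%nat; 3%nat]].

Fixpoint step_aux (p : Z) (s : list Z) : list Z :=
  match s with [] => [] | c :: cs => G c p :: step_aux c cs end.

Lemma nth_map_seq0 {A} (F : nat -> A) L j d :
  (j < L)%nat -> nth j (map F (seq 0 L)) d = F j.
Proof.
  intros H. rewrite (nth_indep _ d (F 0%nat)) by (rewrite length_map, length_seq; lia).
  rewrite map_nth, seq_nth by lia. reflexivity.
Qed.

Lemma map_nth_all (F : Z -> Z) (x : list Z) :
  map (fun j => F (nth j x 0)) (seq 0 (length x)) = map F x.
Proof.
  induction x as [|a x IH]; [reflexivity|].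
  simpl length. simpl seq. rewrite <- seq_shift. simpl. rewrite map_map. simpl. now rewrite IH.
Qed.

Lemma run_map1 (h : list Z -> Z) x :
  run [IMap h [0%nat]] x = map (fun c => h [c]) x.
Proof.
  unfold run. simpl. apply (map_nth_all (fun c => h [c])).
Qed.

Lemma filter_false {A} (f : A -> bool) l :
  (forall x, In x l -> f x = false) -> filter f l = [].
Proof.
  induction l as [|a l IH]; simpl; intros H; [reflexivity|].
  rewrite H by auto. apply IH; auto.
Qed.

Lemma shift_filter j :
  filter (fun j' => Z.of_nat j' + 1 =? Z.of_nat j) (seq 0 (S j)) =
  match j with 0%nat => [] | S m => [m] end.
Proof.
  destruct j as [|m]; [reflexivity|].
  rewrite seq_S, seq_S, !filter_app.
  rewrite filter_false.
  2:{ intros x Hx. apply in_seq in Hx. apply Z.eqb_neq. lia. }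
  cbn [filter app]. simpl Nat.add. replace (Z.of_nat m + 1 =? Z.of_nat (S m)) with true by (symmetry; apply Z.eqb_eq; lia).
  replace (Z.of_nat (S m) + 1 =? Z.of_nat (S m)) with false by (symmetry; apply Z.eqb_neq; lia).
  reflexivity.
Qed.

Lemma run_body (s : list Z) :
  run bodyP s =
  map (fun j => gB [nth j s 0; match j with 0%nat => 4 | S j' => nth j' s 0 end])
      (seq 0 (length s)).
Proof.
  unfold run, bodyP. simpl.
  apply map_ext_in. intros j Hj. apply in_seq in Hj. f_equal. f_equal. f_equal.
  unfold kqv_sem. rewrite nth_map_seq0 by lia.
  rewrite (filter_ext_in _ (fun j' => Z.of_nat j' + 1 =? Z.of_nat j)).
  2:{ intros a Ha. apply in_seq in Ha. simpl.
      rewrite map_map, !nth_map_seq0 by lia. reflexivity. }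
  rewrite shift_filter. destruct j; [reflexivity|]. simpl.
  rewrite Z.add_0_r. apply Z.quot_1_r.
Qed.

Lemma map_step (s : list Z) (p : Z) :
  map (fun j => gB [nth j s 0; match j with 0%nat => p | S j' => nth j' s 0 end])
      (seq 0 (length s)) = step_aux p s.
Proof.
  revert p. induction s as [|c s IH]; intros p; [reflexivity|].
  simpl length. simpl seq. rewrite <- seq_shift. simpl. rewrite map_map. simpl.
  f_equal. rewrite <- (IH c). apply map_ext. intros [|j]; reflexivity.
Qed.

Lemma body_step s : run bodyP s = step_aux 4 s.
Proof. rewrite run_body. apply map_step. Qed.

Lemma last_indep (z : Z) l d d' : last (z :: l) d = last (z :: l) d'.
Proof. revert z; induction l as [|y l IH]; intros z; [reflexivity|]. apply IH. Qed.

Lemma step_app p l1 l2 : step_aux p (l1 ++ l2) = step_aux p l1 ++ step_aux (last l1 p) l2.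
Proof.
  revert p. induction l1 as [|a l1 IH]; intros p; [reflexivity|].
  simpl. rewrite IH. destruct l1 as [|z l1]; [reflexivity|].
  f_equal. f_equal. f_equal. apply last_indep.
Qed.

Lemma step_rep4 m : step_aux 4 (repeat 4 m) = repeat 4 m.
Proof. induction m; simpl; [reflexivity| now rewrite IHm]. Qed.

Lemma last_rep4 m : last (repeat 4 m) 4 = 4.
Proof. induction m as [|m IH]; [reflexivity|]. simpl. destruct m; [reflexivity|exact IH]. Qed.

Lemma step_rep3 p m : step_aux p (repeat 3 m) = repeat 3 m.
Proof. revert p; induction m; intros p; simpl; [reflexivity| now rewrite IHm]. Qed.

Definition bit (b : Z) := b = 0 \/ b = 1.

Lemma G_bit c p : bit c -> G c p = p.
Proof. intros [-> | ->]; reflexivity. Qed.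

Lemma step_bits p u b : Forall bit u -> bit b -> step_aux p (u ++ [b]) = p :: u.
Proof.
  revert p. induction u as [|c u IH]; intros p Hu Hb; simpl.
  - now rewrite G_bit.
  - inversion Hu; subst. rewrite G_bit by auto. f_equal. apply IH; auto.
Qed.

Lemma parity_range v : 0 <= parity v < 2.
Proof. unfold parity. apply Z.mod_pos_bound. lia. Qed.

Lemma parity_cons b v : parity (b :: v) = (parity v + b) mod 2.
Proof. unfold parity. simpl. rewrite Zplus_mod_idemp_l. f_equal. lia. Qed.

Definition state (n' : nat) (u v : list Z) :=
  repeat 4 (length v) ++ u ++ [10 + parity v] ++ repeat 3 n'.

Lemma one_step n' u b v : Forall bit u -> bit b ->
  run bodyP (state n' (u ++ [b]) v) = state n' u (b :: v).
Proof.
  intros Hu Hb. rewrite body_step. unfold state.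
  rewrite step_app, step_rep4, last_rep4, step_app, step_bits by auto.
  rewrite last_last. rewrite step_app. cbn [step_aux last app].
  rewrite step_rep3.
  assert (G (10 + parity v) b = 10 + parity (b :: v)) as ->.
  { pose proof (parity_range v). rewrite parity_cons. unfold G.
    destruct Hb as [-> | ->]; simpl;
    (assert (parity v = 0 \/ parity v = 1) as [E|E] by lia; rewrite E; reflexivity). }
  change (length (b :: v)) with (S (length v)). simpl repeat. rewrite repeat_cons, <- app_assoc. reflexivity.
Qed.

Lemma iter_steps n' u v : Forall bit u ->
  Nat.iter (length u) (run bodyP) (state n' u v) = state n' [] (u ++ v).
Proof.
  revert v. induction u as [|b u IH] using rev_ind; intros v Hu; [reflexivity|].
  apply Forall_app in Hu as [Hu Hb]. inversion Hb; subst.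
  rewrite length_app, Nat.add_comm. simpl plus. rewrite Nat.iter_succ_r.
  rewrite one_step by auto. rewrite IH by auto. rewrite <- app_assoc. reflexivity.
Qed.

Lemma is_raspl_pre : is_raspl preP. Proof. reflexivity. Qed.
Lemma is_raspl_post : is_raspl postP. Proof. reflexivity. Qed.
Lemma is_raspl_body : is_raspl bodyP. Proof. reflexivity. Qed.

Theorem proposition1 :
  exists (pre body post : program),
    is_raspl pre /\ is_raspl body /\ is_raspl post /\
    forall (n n' : nat) (xs : list Z),
      (1 <= n)%nat -> length xs = n ->
      Forall (fun b => b = 0 \/ b = 1) xs ->
      let out := run_looped pre body post (fun m => m) n
                   (xs ++ [EOQ] ++ repeat EOS n') in
      length out = (n + 1 + n')%nat /\
      nth n out 0 = parity xs /\
      (forall k, (k < n')%nat -> nth (n + 1 + k) out 0 = EOS).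
Proof.
  exists preP, bodyP, postP.
  split; [exact is_raspl_pre|]. split; [exact is_raspl_body|]. split; [exact is_raspl_post|].
  intros n n' xs Hn Hl Hx out.
  assert (Hpre : run preP (xs ++ [EOQ] ++ repeat EOS n') = state n' xs []).
  { unfold preP. rewrite run_map1. unfold state. simpl. rewrite map_app. f_equal.
    - clear -Hx. induction Hx as [|b xs Hb Hx IH]; [reflexivity|].
      simpl. rewrite IH. destruct Hb as [-> | ->]; reflexivity.
    - simpl. f_equal. clear. induction n' as [|k IH]; [reflexivity|]. simpl. rewrite IH. reflexivity. }
  assert (Hout : out = repeat 4 n ++ [parity xs] ++ repeat 3 n').
  { unfold out, run_looped. rewrite Hpre, <- Hl, iter_steps by exact Hx.
    unfold postP. rewrite run_map1. unfold state. rewrite app_nil_r, Hl.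
    rewrite !map_app. f_equal.
    - clear. induction n as [|k IH]; [reflexivity|]. cbn [map repeat]. rewrite IH. reflexivity.
    - cbn [map app]. pose proof (parity_range xs).
      assert (Hr : map (fun c => hPost [c]) (repeat 3 n') = repeat 3 n').
      { clear. induction n' as [|k IH]; [reflexivity|]. cbn [map repeat]. rewrite IH. reflexivity. }
      rewrite Hr.
      assert (parity xs = 0 \/ parity xs = 1) as [E|E] by lia; rewrite E; reflexivity. }
  rewrite Hout. split; [|split].
  - rewrite !length_app, !repeat_length. simpl. lia.
  - rewrite app_nth2; rewrite repeat_length; [|lia]. rewrite Nat.sub_diag. reflexivity.
  - intros k Hk. rewrite app_nth2; rewrite repeat_length; [|lia].
    replace (n + 1 + k - n)%nat with (S k) by lia. simpl.
    rewrite nth_repeat_lt by lia. reflexivity.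
Qed.
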